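(* Assume $M$ is projective in $\sigma[M]$. Then $\mathrm{Nil}_*(M)=\mathrm{Nil}_*(M)\cdot M=M\text{-}\mathrm{Nil}_*(M)$.
   Context: $R$ is a ring with identity, modules are unital left $R$-modules, $M$ is a fixed left $R$-module; $\sigma[M]$ is the full subcategory of $R$-modules isomorphic to submodules of $M$-generated modules. For $N\le M$ and a module $X$, $N\cdot X$ is the intersection of the kernels of all homomorphisms $X\to W$ where $W$ ranges over modules with $f(N)=0$ for all $f\in\mathrm{Hom}_R(M,W)$. An element $x$ of a module $X$ is strongly nilpotent if $x=\sum_{i=1}^r a_ix_i$ with $a_i\in R$, $x_i\in X$, such that for each $i$ and every sequence $a_{i1},a_{i2},\dots$ with $a_{i1}=a_i$ and $a_{i,n+1}\in a_{in}Ra_{in}$ for all $n$, there is $k$ with $a_{ik}Rx_i=0$; $\mathrm{Nil}_*(X)$ is the set of strongly nilpotent elements of $X$ (a submodule of $X$). For $X\in\sigma[M]$, $x\in X$ is strongly $M$-nilpotent if $x=\sum_{i=1}^n r_if_i(m_i)$ with $r_i\in R$, $m_i\in M$, $x_i\in X$, $f_i\in\mathrm{Hom}_R(M,Rx_i)$, such that for each $i$ and every sequence $r_{i1},r_{i2},\dots$ with $r_{i1}=r_i$ and $r_{i,t+1}\in r_{it}Rr_{it}$ for all $t$, there is $k$ with $r_{ik}Rf_i(m_i)=0$; $M\text{-}\mathrm{Nil}_*(X)$ is the set of strongly $M$-nilpotent elements of $X$. *)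

(* Defs.v *)
From HB Require Import structures.
From mathcomp Require Import all_boot all_order all_algebra.
Set Implicit Arguments. Unset Strict Implicit. Unset Printing Implicit Defensive.
Import GRing.Theory.
Local Open Scope ring_scope.

Section ModuleDefs.
Variable R : pzRingType.

(* Y is M-generated: Y is the trace of M in Y, i.e. every element of Y is a
   finite sum f_1(m_1)+...+f_n(m_n) with f_i in Hom(M,Y)  (equivalently Y is
   an epimorphic image of a direct sum of copies of M). *)
Definition M_generated (M Y : lmodType R) : Prop :=
  forall y : Y, exists n (f : 'I_n -> {linear M -> Y}) (m : 'I_n -> M),
    y = \sum_(i < n) f i (m i).

(* X belongs to sigma[M]: X is isomorphic to a submodule of an M-generated
   module, i.e. X embeds (injective R-linear map) into some M-generated module. *)
Definition in_sigma (M X : lmodType R) : Prop :=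
  exists (Y : lmodType R) (g : {linear X -> Y}), M_generated M Y /\ injective g.

Definition projective_in_sigma (M : lmodType R) : Prop :=
  forall (A B : lmodType R), in_sigma M A -> in_sigma M B ->
  forall (g : {linear A -> B}), (forall b : B, exists a : A, g a = b) ->
  forall (f : {linear M -> B}), exists h : {linear M -> A},
    forall m : M, g (h m) = f m.

Definition prodMod (M : lmodType R) (N : M -> Prop) (X : lmodType R) : X -> Prop :=
  fun x => forall (W : lmodType R),
    (forall (f : {linear M -> W}) (n : M), N n -> f n = 0) ->
    forall h : {linear X -> W}, h x = 0.

Definition snil_cond (X : lmodType R) (a : R) (x : X) : Prop :=
  forall s : nat -> R, s 0%N = a ->
    (forall n, exists r : R, s n.+1 = s n * r * s n) ->
    exists k, forall r : R, (s k * r) *: x = 0.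

Definition Nil_star (X : lmodType R) : X -> Prop :=
  fun x => exists n (a : 'I_n -> R) (xs : 'I_n -> X),
    x = \sum_(i < n) a i *: xs i /\ forall i, snil_cond (a i) (xs i).

(* M-Nil_*(X): strongly M-nilpotent elements of X; f_i in Hom(M, R x_i) is
   encoded as an R-linear map M -> X with image inside R x_i. *)
Definition M_Nil_star (M X : lmodType R) : X -> Prop :=
  fun x => exists n (r : 'I_n -> R) (m : 'I_n -> M) (xs : 'I_n -> X)
             (f : 'I_n -> {linear M -> X}),
    x = \sum_(i < n) r i *: f i (m i) /\
    forall i, (forall m' : M, exists t : R, f i m' = t *: xs i) /\
              snil_cond (r i) (f i (m i)).

End ModuleDefs.

(* Main.v *)
Require Import Defs.
From HB Require Import structures.
From mathcomp Require Import all_boot all_order all_algebra.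
From mathcomp Require Import boolp functions.
Set Implicit Arguments. Unset Strict Implicit. Unset Printing Implicit Defensive.
Import GRing.Theory.
Local Open Scope ring_scope.

Record submodP (R : pzRingType) (V : lmodType R) := SubmodP {
  smp :> V -> Prop;
  smp0 : smp 0;
  smpD : forall x y, smp x -> smp y -> smp (x + y);
  smpZ : forall (a : R) x, smp x -> smp (a *: x) }.

Section SubMod.
Variables (R : pzRingType) (V : lmodType R) (S : submodP V).
Definition smb : pred V := fun v => `[< S v >].
Lemma smb_closed : subsemimod_closed smb.
Proof.
split; first split.
- by apply/asboolP; exact: smp0.
- by move=> x y /asboolP Hx /asboolP Hy; apply/asboolP; exact: smpD.
- by move=> a x /asboolP Hx; apply/asboolP; exact: smpZ.
Qed.
HB.instance Definition _ := GRing.isSubmodClosed.Build R V smb smb_closed.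
Definition subm := {v : V | smb v}.
HB.instance Definition _ := [isSub of subm for (@sval V smb)].
HB.instance Definition _ := [Choice of subm by <:].
HB.instance Definition _ := [SubChoice_isSubLmodule of subm by <:].
Lemma subm_val_lin : linear (val : subm -> V).
Proof. by move=> a u v. Qed.
End SubMod.

Section Test.
Variables (R : pzRingType) (V : lmodType R) (S : submodP V).
Check (fun x y : subm S => x + y).
Check (val : subm S -> V) : {linear subm S -> V}.
End Test.

Section Quot.
Variables (R : pzRingType) (M : lmodType R) (N : submodP M).

Lemma NN x : N x -> N (- x).
Proof. by move=> Hx; rewrite -scaleN1r; apply: smpZ. Qed.
Lemma NB x y : N x -> N y -> N (x - y).
Proof. by move=> Hx Hy; apply: smpD => //; apply: NN. Qed.

Definition cls (m : M) : pred M := fun z => `[< N (z - m) >].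
Lemma cls_ex m : exists z, cls m z.
Proof. by exists m; apply/asboolP; rewrite subrr; apply: smp0. Qed.
Definition canon m := xchoose (cls_ex m).
Lemma canonP m : N (canon m - m).
Proof. exact/asboolP/(xchooseP (cls_ex m)). Qed.
Lemma canon_eq m m' : N (m - m') -> canon m = canon m'.
Proof.
move=> H; apply: eq_xchoose => z; rewrite /cls.
apply/asboolP/asboolP => Hz.
- by have := smpD Hz H; rewrite addrA subrK.
- by have := NB Hz H; rewrite opprB addrA subrK.
Qed.
Lemma canon_id m : canon (canon m) = canon m.
Proof. exact/canon_eq/canonP. Qed.

Definition Q := {m : M | canon m == m}.
HB.instance Definition _ := [isSub of Q for (@sval M (fun m => canon m == m))].
HB.instance Definition _ := [Choice of Q by <:].

Definition pi (m : M) : Q := exist _ (canon m) (introT eqP (canon_id m)).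
Lemma pi_val (q : Q) : pi (val q) = q.
Proof. by apply: val_inj => /=; apply/eqP; case: q. Qed.
Lemma pi_eq x y : (pi x = pi y) <-> N (x - y).
Proof.
split; last by move=> H; apply: val_inj; apply: canon_eq.
move=> /(congr1 val) /= E.
have := NB (canonP y) (canonP x); rewrite E.
suff -> : canon y - y - (canon y - x) = x - y by [].
by rewrite opprB addrC addrA subrK.
Qed.
Lemma pi_surj (q : Q) : exists m, q = pi m.
Proof. by exists (val q); rewrite pi_val. Qed.
Lemma pi_val_N m : N (val (pi m) - m).
Proof. exact: canonP. Qed.

Definition qadd (a b : Q) := pi (val a + val b).
Definition qopp (a : Q) := pi (- val a).
Definition qzero := pi 0.
Definition qscale (r : R) (a : Q) := pi (r *: val a).

Lemma qaddE x y : qadd (pi x) (pi y) = pi (x + y).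
Proof.
apply/pi_eq; rewrite opprD addrACA; apply: smpD; exact: pi_val_N.
Qed.

Lemma qoppE x : qopp (pi x) = pi (- x).
Proof. by apply/pi_eq; rewrite opprK addrC -opprB; apply: NN; exact: pi_val_N. Qed.
Lemma qscaleE r x : qscale r (pi x) = pi (r *: x).
Proof. by apply/pi_eq; rewrite -scalerBr; apply: smpZ; exact: pi_val_N. Qed.

Lemma qaddA : associative qadd.
Proof.
move=> a b c; case: (pi_surj a) => x ->; case: (pi_surj b) => y ->; case: (pi_surj c) => z ->.
by rewrite !qaddE addrA.
Qed.
Lemma qaddC : commutative qadd.
Proof. by move=> a b; case: (pi_surj a) => x ->; case: (pi_surj b) => y ->; rewrite !qaddE addrC. Qed.
Lemma qadd0 : left_id qzero qadd.
Proof. by move=> a; case: (pi_surj a) => x ->; rewrite /qzero qaddE add0r. Qed.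
Lemma qaddN : left_inverse qzero qopp qadd.
Proof. by move=> a; case: (pi_surj a) => x ->; rewrite qoppE qaddE addNr. Qed.
HB.instance Definition _ := GRing.isZmodule.Build Q qaddA qaddC qadd0 qaddN.

Lemma qscaleA a b v : qscale a (qscale b v) = qscale (a * b) v.
Proof. by case: (pi_surj v) => x ->; rewrite !qscaleE scalerA. Qed.
Lemma qscale1 : left_id 1 qscale.
Proof. by move=> v; case: (pi_surj v) => x ->; rewrite !qscaleE scale1r. Qed.
Lemma qscaleDr : right_distributive qscale +%R.
Proof.
move=> r u v; case: (pi_surj u) => x ->; case: (pi_surj v) => y ->.
change (qscale r (qadd (pi x) (pi y)) = qadd (qscale r (pi x)) (qscale r (pi y))).
by rewrite qaddE !qscaleE qaddE scalerDr.
Qed.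
Lemma qscaleDl v : {morph qscale^~ v : a b / a + b}.
Proof.
move=> a b; case: (pi_surj v) => x ->.
change (qscale (a + b) (pi x) = qadd (qscale a (pi x)) (qscale b (pi x))).
by rewrite !qscaleE qaddE scalerDl.
Qed.
HB.instance Definition _ := GRing.Zmodule_isLmodule.Build R Q qscaleA qscale1 qscaleDr qscaleDl.

Lemma pi_lin : linear pi.
Proof.
move=> r x y; change (pi (r *: x + y) = qadd (qscale r (pi x)) (pi y)).
by rewrite qscaleE qaddE.
Qed.
HB.instance Definition _ := GRing.isLinear.Build R M Q _ pi pi_lin.
End Quot.

Section FS.
Variables (R : pzRingType) (M : lmodType R).

Definition fsupp (phi : M -> M) (s : seq M) := forall z, z \notin s -> phi z = 0.

Lemma fsupp_cat phi s t : fsupp phi s -> fsupp phi (s ++ t).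
Proof. by move=> H z; rewrite mem_cat negb_or => /andP[/H]. Qed.
Lemma fsupp_catr phi s t : fsupp phi t -> fsupp phi (s ++ t).
Proof. by move=> H z; rewrite mem_cat negb_or => /andP[_ /H]. Qed.

Lemma sum_indep phi s t : fsupp phi s -> {subset s <= t} ->
  \sum_(z <- undup t) phi z = \sum_(z <- undup s) phi z.
Proof.
move=> Hs st.
rewrite (bigID (mem s)) /= [X in _ + X]big1 ?addr0; last first.
  by move=> z /Hs.
rewrite -big_filter; apply: perm_big; apply: uniq_perm.
- exact/filter_uniq/undup_uniq.
- exact: undup_uniq.
move=> z; rewrite mem_filter !mem_undup /=.
by apply/andP/idP => [[]//|zs]; split => //; apply: st.
Qed.

Definition suppOf (phi : M -> M) : seq M :=
  match pselect (exists s, fsupp phi s) with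
  | left H => proj1_sig (cid H)
  | right _ => [::] end.

Definition Gf (phi : M -> M) := \sum_(z <- undup (suppOf phi)) phi z.

Lemma suppOfP phi s : fsupp phi s -> fsupp phi (suppOf phi).
Proof.
move=> H; rewrite /suppOf; case: pselect => [H'|[]]; last by exists s.
exact: (proj2_sig (cid H')).
Qed.

Lemma GfE phi s : fsupp phi s -> Gf phi = \sum_(z <- undup s) phi z.
Proof.
move=> H; rewrite /Gf -(@sum_indep phi (suppOf phi) (suppOf phi ++ s)).
- by rewrite (@sum_indep phi s) // => z zs; rewrite mem_cat zs orbT.
- exact: suppOfP H.
- by move=> z zs; rewrite mem_cat zs.
Qed.

Lemma Gf_lin phi psi s t (a : R) : fsupp phi s -> fsupp psi t ->
  Gf (a *: phi + psi) = a *: Gf phi + Gf psi.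
Proof.
move=> Hs Ht.
have Hst : fsupp (a *: phi + psi) (s ++ t).
  move=> z; rewrite mem_cat negb_or => /andP[zs zt].
  by rewrite /GRing.add /GRing.scale /= Hs // Ht // scaler0 addr0.
rewrite (GfE Hst) (GfE Hs) (GfE Ht).
rewrite -(@sum_indep phi s (s ++ t)) //; last by move=> z zs; rewrite mem_cat zs.
rewrite -(@sum_indep psi t (s ++ t)) //; last by move=> z zs; rewrite mem_cat zs orbT.
by rewrite scaler_sumr -big_split.
Qed.

Definition FSP : submodP (M -> M).
Proof.
refine (@SubmodP _ _ (fun phi => exists s, fsupp phi s) _ _ _).
- by exists [::] => z.
- move=> x y [s Hs] [t Ht]; exists (s ++ t) => z; rewrite mem_cat negb_or => /andP[zs zt].
  by rewrite /GRing.add /= Hs // Ht // addr0.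
- move=> a x [s Hs]; exists s => z zs.
  by rewrite /GRing.scale /= Hs // scaler0.
Defined.

Definition FSA : submodP (M -> M).
Proof.
refine (@SubmodP _ _ (fun phi => (exists s, fsupp phi s) /\ forall z, exists t : R, phi z = t *: z) _ _ _).
- by split; [exists [::] => z | move=> z; exists 0; rewrite scale0r].
- move=> x y [[s Hs] Hx] [[t Ht] Hy]; split.
    exists (s ++ t) => z; rewrite mem_cat negb_or => /andP[zs zt].
    by rewrite /GRing.add /= Hs // Ht // addr0.
  move=> z; case: (Hx z) => u Hu; case: (Hy z) => v Hv; exists (u + v).
  by rewrite /GRing.add /= Hu Hv scalerDl.
- move=> a x [[s Hs] Hx]; split.
    by exists s => z zs; rewrite /GRing.scale /= Hs // scaler0.
  by move=> z; case: (Hx z) => u Hu; exists (a * u); rewrite /GRing.scale /= Hu scalerA.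
Defined.

Definition Y := subm FSP.
Definition A := subm FSA.

Lemma Yfs (y : Y) : exists s, fsupp (val y) s.
Proof. by case: y => /= phi /asboolP. Qed.
Lemma Afs (a : A) : (exists s, fsupp (val a) s) /\ forall z, exists t : R, val a z = t *: z.
Proof. by case: a => /= phi /asboolP. Qed.

Definition GY (y : Y) : M := Gf (val y).
Lemma GY_lin : linear GY.
Proof.
move=> a u v; rewrite /GY; case: (Yfs u) => s Hs; case: (Yfs v) => t Ht.
by rewrite -(Gf_lin a Hs Ht).
Qed.
HB.instance Definition _ := GRing.isLinear.Build R Y M _ GY GY_lin.

Definition GA (y : A) : M := Gf (val y).
Lemma GA_lin : linear GA.
Proof.
move=> a u v; rewrite /GA; case: (Afs u) => [[s Hs] _]; case: (Afs v) => [[t Ht] _].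
by rewrite -(Gf_lin a Hs Ht).
Qed.
HB.instance Definition _ := GRing.isLinear.Build R A M _ GA GA_lin.

End FS.

Section Gen.
Variables (R : pzRingType) (M : lmodType R).

Definition SumOf (P : M -> Prop) (x : M) :=
  exists n (v : 'I_n -> M), x = \sum_(i < n) v i /\ forall i, P (v i).

Lemma SumOf0 P : SumOf P 0.
Proof. by exists 0%N, (fun _ => 0); split; [rewrite big_ord0 | case]. Qed.

Lemma SumOf1 (P : M -> Prop) v : P v -> SumOf P v.
Proof. by move=> Pv; exists 1%N, (fun _ => v); split; [rewrite big_ord1 | ]. Qed.

Lemma SumOfD P x y : SumOf P x -> SumOf P y -> SumOf P (x + y).
Proof.
move=> [n1 [v1 [-> H1]]] [n2 [v2 [-> H2]]].
exists (n1 + n2)%N, (fun i => match fintype.split i with inl j => v1 j | inr j => v2 j end).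
split; last by move=> i; case: (fintype.split i).
rewrite big_split_ord /=; congr (_ + _); apply: eq_bigr => j _.
- by rewrite (unsplitK (inl _ j)).
- by rewrite (unsplitK (inr _ j)).
Qed.

Lemma SumOf_big P (I : Type) (s : seq I) (F : I -> M) :
  (forall i, SumOf P (F i)) -> SumOf P (\sum_(i <- s) F i).
Proof.
move=> H; elim: s => [|i s IH]; first by rewrite big_nil; exact: SumOf0.
by rewrite big_cons; apply: SumOfD.
Qed.

Lemma SumOf_mono (P Q : M -> Prop) x : (forall v, P v -> Q v) -> SumOf P x -> SumOf Q x.
Proof. by move=> PQ [n [v [-> H]]]; exists n, v; split => // i; apply: PQ. Qed.

Definition NilP (v : M) := exists (a : R) (y : M), v = a *: y /\ snil_cond a y.

Lemma Nil_SumOf x : Nil_star x <-> SumOf NilP x.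
Proof.
split.
- move=> [n [a [xs [-> H]]]]; exists n, (fun i => a i *: xs i); split => // i.
  by exists (a i), (xs i).
- move=> [n [v [-> H]]].
  have H' : forall i, exists ay : R * M, v i = ay.1 *: ay.2 /\ snil_cond ay.1 ay.2.
    by move=> i; case: (H i) => a [y Hy]; exists (a, y).
  have [f Hf] := choice H'.
  exists n, (fun i => (f i).1), (fun i => (f i).2); split.
    by apply: eq_bigr => i _; case: (Hf i).
  by move=> i; case: (Hf i).
Qed.

Definition MNilP (v : M) := exists (r : R) (m xs : M) (f : {linear M -> M}),
  v = r *: f m /\ (forall m' : M, exists t : R, f m' = t *: xs) /\ snil_cond r (f m).

Lemma MNil_SumOf x : M_Nil_star M x <-> SumOf MNilP x.
Proof.
split.
- move=> [n [r [m [xs [f [-> H]]]]]]; exists n, (fun i => r i *: f i (m i)); split => // i.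
  by exists (r i), (m i), (xs i), (f i).
- move=> [n [v [-> H]]].
  have H' : forall i, exists q : R * M * M * {linear M -> M},
     v i = q.1.1.1 *: q.2 q.1.1.2 /\ (forall m' : M, exists t : R, q.2 m' = t *: q.1.2)
      /\ snil_cond q.1.1.1 (q.2 q.1.1.2).
    by move=> i; case: (H i) => r [m [xs [f Hy]]]; exists (r, m, xs, f).
  have [f Hf] := choice H'.
  exists n, (fun i => (f i).1.1.1), (fun i => (f i).1.1.2), (fun i => (f i).1.2),
     (fun i => (f i).2); split.
    by apply: eq_bigr => i _; case: (Hf i).
  by move=> i; case: (Hf i) => _ [].
Qed.
End Gen.

Section Snil.
Variables (R : pzRingType).

Lemma snil_lin (X Z : lmodType R) (f : {linear X -> Z}) a y :
  snil_cond a y -> snil_cond a (f y).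
Proof.
move=> H s s0 st; case: (H s s0 st) => k Hk; exists k => r.
by rewrite -linearZ Hk linear0.
Qed.

Lemma snil_scale (X : lmodType R) (r a : R) (y : X) :
  snil_cond a y -> snil_cond (r * a) y.
Proof.
move=> H s s0 st.
have [t Ht] := choice st.
pose u := fix u n := if n is n'.+1 then u n' * (t n' * r) * u n' else a.
have su : forall n, s n = r * u n.
  elim=> [|n IH] //=; rewrite Ht IH.
  by rewrite !mulrA.
case: (H u erefl) => [n|k Hk]; first by exists (t n * r).
by exists k => q; rewrite su -mulrA -scalerA Hk scaler0.
Qed.
End Snil.

Section Main.
Variables (R : pzRingType) (M : lmodType R).

Lemma SumOf_bind (P Q : M -> Prop) x : (forall v, P v -> SumOf Q v) -> SumOf P x -> SumOf Q x.
Proof. by move=> PQ [n [v [-> H]]]; apply: SumOf_big => i; apply: PQ. Qed.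

Lemma NilP_scale (r : R) (v : M) : NilP v -> NilP (r *: v).
Proof.
move=> [a [y [-> H]]]; exists (r * a), y; split; first by rewrite scalerA.
exact: snil_scale.
Qed.

Definition NilSub : submodP M.
Proof.
refine (@SubmodP _ _ (@Nil_star R M) _ _ _).
- by apply/Nil_SumOf; exact: SumOf0.
- by move=> x y /Nil_SumOf Hx /Nil_SumOf Hy; apply/Nil_SumOf; apply: SumOfD.
- move=> a x /Nil_SumOf [n [v [-> H]]]; apply/Nil_SumOf.
  rewrite scaler_sumr; apply: SumOf_big => i; apply: SumOf1; exact: NilP_scale.
Defined.

Lemma Nil_inv (f : {linear M -> M}) x : Nil_star x -> Nil_star (f x).
Proof.
move=> /Nil_SumOf [n [v [-> H]]]; apply/Nil_SumOf.
rewrite linear_sum; apply: SumOf_big => i; apply: SumOf1.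
case: (H i) => a [y [-> Hs]]; exists a, (f y); split; first by rewrite linearZ.
exact: snil_lin.
Qed.

Lemma mgen_seq (X : lmodType R) (s : seq M) (f : M -> {linear M -> X}) (m : M -> M) y :
  y = \sum_(z <- s) f z (m z) -> exists n (F : 'I_n -> {linear M -> X}) (mm : 'I_n -> M),
    y = \sum_(i < n) F i (mm i).
Proof.
move=> ->; exists (size s), (fun i => f (nth 0 s i)), (fun i => m (nth 0 s i)).
by rewrite (big_nth 0) big_mkord.
Qed.

Lemma mgen_single (X : lmodType R) (f : {linear M -> X}) :
  (forall y, exists m, y = f m) -> M_generated M X.
Proof.
move=> H y; case: (H y) => m ->; exists 1%N, (fun _ => f), (fun _ => m).
by rewrite big_ord1.
Qed.

Lemma in_sigma_gen (X : lmodType R) : M_generated M X -> in_sigma M X.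
Proof. by move=> H; exists X, idfun; split. Qed.

Lemma sigmaM : in_sigma M M.
Proof. by apply/in_sigma_gen/(mgen_single (f := idfun)) => y; exists y. Qed.

Theorem part1 : projective_in_sigma M ->
  forall x : M, Nil_star x <-> @prodMod R M (@Nil_star R M) M x.
Proof.
move=> proj x; split.
  by move=> Nx W HW h; exact: HW h x Nx.
move=> Hx.
pose W := Q NilSub.
pose p : {linear M -> W} := pi NilSub.
have pN : forall z, (p z = 0) <-> Nil_star z.
  move=> z; rewrite -(linear0 p); split.
  - by move=> /pi_eq; rewrite subr0.
  - by move=> Hz; apply/pi_eq; rewrite subr0.
apply/pN; apply: Hx => f n Hn.
have sW : in_sigma M W.
  apply/in_sigma_gen/(mgen_single (f := p)) => y.
  by case: (pi_surj y) => m ->; exists m.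
have [h Hh] := proj M W sigmaM sW p (fun b => match pi_surj b with ex_intro m e => ex_intro _ m (esym e) end) f.
by rewrite -Hh; apply/pN; apply: Nil_inv.
Qed.

Lemma sum_delta (S : seq M) (phi : M -> M) w : uniq S ->
  \sum_(z <- S) (if w == z then phi z else 0) = if w \in S then phi w else 0.
Proof.
elim: S => [|z S IH] /=; first by rewrite big_nil.
move=> /andP[zS uS]; rewrite big_cons IH // in_cons.
case: eqP => [->|_] /=; last by rewrite add0r.
by rewrite (negbTE zS) addr0.
Qed.

Definition iYf (z m : M) : M -> M := fun w => if w == z then m else 0.
Lemma iYf_fs z m : smb (FSP M) (iYf z m).
Proof.
apply/asboolT; exists [:: z] => w; rewrite inE /iYf => /negbTE -> //.
Qed.
Definition iY (z : M) (m : M) : Y M := exist _ (iYf z m) (iYf_fs z m).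
Lemma iY_lin z : linear (iY z).
Proof.
move=> a u v; apply: val_inj; rewrite /=; apply/funext => w.
rewrite /iYf.
have E : forall (f g : M -> M), (a *: f + g) w = a *: f w + g w by [].
by rewrite E; case: (w == z) => //; rewrite scaler0 addr0.
Qed.
HB.instance Definition _ z := GRing.isLinear.Build R M (Y M) _ (iY z) (iY_lin z).

Lemma mgenY : M_generated M (Y M).
Proof.
move=> y; case: (Yfs y) => s Hs.
apply: (@mgen_seq _ (undup s) iY (val y)).
apply: val_inj; rewrite raddf_sum /=; apply/funext => w.
rewrite fct_sumE /=.
rewrite (sum_delta _ _ (undup_uniq s)) mem_undup.
by case: ifP => // /negbT /Hs.
Qed.

Definition eA (a : A M) : Y M := exist _ (val a) (asboolT (proj1 (Afs a))).
Lemma eA_lin : linear eA.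
Proof. by move=> c u v; apply: val_inj. Qed.
HB.instance Definition _ := GRing.isLinear.Build R (A M) (Y M) _ eA eA_lin.

Lemma sigmaA : in_sigma M (A M).
Proof.
exists (Y M), eA; split; first exact: mgenY.
by move=> u v /(congr1 val) /= /val_inj.
Qed.

Lemma iA_mem m : smb (FSA M) (iYf m m).
Proof.
apply/asboolT; split; first by exists [:: m] => w; rewrite inE /iYf => /negbTE ->.
move=> z; rewrite /iYf; case: eqP => [->|_]; first by exists 1; rewrite scale1r.
by exists 0; rewrite scale0r.
Qed.

Lemma GA_surj (m : M) : exists a : A M, GA a = m.
Proof.
exists (exist _ (iYf m m) (iA_mem m)).
rewrite /GA /= (@GfE _ _ _ [:: m]); last by move=> w; rewrite inE /iYf => /negbTE ->.
by rewrite /= big_cons big_nil /iYf eqxx addr0.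
Qed.

Theorem part2 : projective_in_sigma M ->
  forall x : M, Nil_star x <-> M_Nil_star M x.
Proof.
move=> proj x; split; last first.
  move=> /MNil_SumOf H; apply/Nil_SumOf; apply: SumOf_mono H.
  by move=> v [r [m [xs [f [-> [_ Hs]]]]]]; exists r, (f m).
move=> /Nil_SumOf H; apply/MNil_SumOf; apply: SumOf_bind H.
move=> v [a [y [-> Hs]]].
have [h Hh] := proj (A M) M sigmaA sigmaM (@GA R M) GA_surj idfun.
pose ev (z : M) (m : M) : M := val (h m) z.
have ev_lin : forall z, linear (ev z).
  by move=> z c u w; rewrite /ev linearP.
pose evl (z : M) : {linear M -> M} := HB.pack (ev z) (GRing.isLinear.Build R M M _ (ev z) (ev_lin z)).
case: (Afs (h y)) => [[s Hsupp] Hcyc].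
have -> : y = \sum_(z <- undup s) evl z y.
  by rewrite -[LHS]Hh /= /GA (GfE Hsupp).
rewrite scaler_sumr; apply: SumOf_big => z; apply: SumOf1.
exists a, y, z, (evl z); split => //; split.
  by move=> m'; case: (Afs (h m')) => _ /(_ z).
exact: snil_lin.
Qed.
End Main.

Theorem corollary3p7 (R : pzRingType) (M : lmodType R) :
  projective_in_sigma M ->
  (forall x : M, Nil_star x <-> @prodMod R M (@Nil_star R M) M x) /\
  (forall x : M, Nil_star x <-> M_Nil_star M x).
Proof.
by move=> proj; split; [exact: part1 | exact: part2].
Qed.
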